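(* Let $K\in\mathbb N$, $\delta\in(0,1)$, and for each $i\in[K]$ let $C_i:[0,1]\to 2^{\Theta_i}$ be a nonincreasing, upper semicontinuous confidence-interval constructor such that $C_i(\alpha)$ is a $(1-\alpha)$-CI for $\theta_i$. Let $C_i^{\mathrm{cal}}$ be the e-CI constructor obtained by calibrating $C_i$ with $f^{\mathrm{BY}(\delta,K)}$, i.e. $C_i^{\mathrm{cal}}(\alpha)=\{\theta\in\Theta_i: f^{\mathrm{BY}(\delta,K)}(P_i^{\mathrm{dual}}(\theta))<1/\alpha\}$ where $P_i^{\mathrm{dual}}(\theta)=\inf\{\alpha\in[0,1]:\theta\notin C_i(\alpha)\}$. Then for any selected set $S\subseteq[K]$, the BY procedure under arbitrary dependence at level $\delta$, which reports $C_i(\delta|S|/(K\ell_K))$ for $i\in S$, outputs the same intervals as the e-BY procedure at level $\delta$ applied to $C_i^{\mathrm{cal}}$, which reports $C_i^{\mathrm{cal}}(\delta|S|/K)$ for $i\in S$.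
   Context: $\ell_K=\sum_{k=1}^K1/k$. The calibrator is $f^{\mathrm{BY}(\delta,K)}(x)=K/(\delta\lceil K\ell_K x/\delta\rceil)$ for $x\le\delta/\ell_K$ and $0$ for $x>\delta/\ell_K$; a calibrator is a nonincreasing $f:[0,1]\to[0,\infty]$ with $\int_0^1 f\le1$. *)

(* Defs.v *)
From HB Require Import structures.
From mathcomp Require Import all_boot all_order all_algebra.
From mathcomp Require Import all_classical all_reals all_analysis.
Set Implicit Arguments. Unset Strict Implicit. Unset Printing Implicit Defensive.
Import Order.TTheory GRing.Theory Num.Theory.
Import numFieldNormedType.Exports.
Local Open Scope classical_set_scope.
Local Open Scope ring_scope.

Definition ellK (R : realType) (K : nat) : R := \sum_(1 <= k < K.+1) (k%:R)^-1.

Definition fBY (R : realType) (delta : R) (K : nat) (x : R) : \bar R :=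
  if x <= delta / ellK R K then
    let c : int := Num.ceil (K%:R * ellK R K * x / delta) in
    if c == 0%R then +oo%E else ((K%:R / (delta * c%:~R))%:E)
  else 0%E.

Definition calibrator (R : realType) (f : R -> \bar R) : Prop :=
  (forall x y, 0 <= x -> x <= y -> y <= 1 -> (f y <= f x)%E) /\
  (forall x, 0 <= x <= 1 -> (0 <= f x)%E) /\
  (\int[lebesgue_measure]_(x in `[0%R, 1%R]) f x <= 1)%E.

(* a CI constructor alpha |-> C(alpha), for a fixed realization of the data *)
Definition nonincreasing_CI (R : realType) (T : Type) (C : R -> set T) : Prop :=
  forall a b : R, 0 <= a -> a <= b -> b <= 1 -> C b `<=` C a.

(* upper semicontinuity: for each theta the non-coverage indicator
   alpha |-> 1{theta \notin C(alpha)} on [0,1] is upper semicontinuous,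
   i.e. {alpha in [0,1] | theta \notin C(alpha)} is closed. *)
Definition usc_CI (R : realType) (T : Type) (C : R -> set T) : Prop :=
  forall t : T, closed [set a : R | (0 <= a <= 1) /\ ~ C a t].

(* dual p-value P^dual(theta) = inf{alpha in [0,1] : theta \notin C(alpha)},
   the infimum being taken in [0,1] (so inf of the empty set is 1). *)
Definition pdual (R : realType) (T : Type) (C : R -> set T) (t : T) : R :=
  let A := [set a : R | (0 <= a <= 1) /\ ~ C a t] in
  if pselect (exists a, A a) then inf A else 1.

Definition calibrate (R : realType) (T : Type) (f : R -> \bar R)
    (C : R -> set T) (alpha : R) : set T :=
  [set t | (f (pdual C t) < (alpha%:E)^-1)%E].

(* Main.v *)
Require Import Defs.
From HB Require Import structures.
From mathcomp Require Import all_boot all_order all_algebra.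
From mathcomp Require Import all_classical all_reals all_analysis.
Import Order.TTheory GRing.Theory Num.Theory.
Import numFieldNormedType.Exports.
Local Open Scope classical_set_scope.
Local Open Scope ring_scope.

Lemma inf_in (R : realType) (A : set R) :
  closed A -> A !=set0 -> has_lbound A -> A (inf A).
Proof.
move=> cA A0 lA; apply: cA => U /nbhs_ballP[e e0 eU].
have [x Ax xlt] := inf_adherent e0 (conj A0 lA).
exists x; split => //; apply: eU.
have := ge_inf lA Ax => xge.
rewrite /ball /= distrC ger0_norm; last by rewrite subr_ge0.
by rewrite ltrBlDl.
Qed.

Lemma key (R : realType) (T : Type) (C : R -> set T) t a :
  nonincreasing_CI C -> usc_CI C -> 0 <= a < 1 -> (C a t <-> a < pdual C t).
Proof.
move=> nC uC /andP[a0 a1]; rewrite /pdual.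
set A := [set b : R | (0 <= b <= 1) /\ ~ C b t].
have lA : has_lbound A by exists 0 => b [/andP[]].
case: pselect => [[b Ab]|nA]; last first.
  split=> // _; apply: contrapT => nC'; apply: nA; exists a; split => //.
  by rewrite a0 ltW.
split.
- move=> Cat; have Ai := @inf_in _ A (uC t) (ex_intro _ b Ab) lA.
  rewrite ltNge; apply/negP => le; case: Ai => /andP[i0 i1]; apply.
  exact: (nC _ _ i0 le (ltW a1) _ Cat).
- move=> alt; apply: contrapT => nCa.
  have : inf A <= a by apply: (ge_inf lA); split => //; rewrite a0 ltW.
  by rewrite leNgt alt.
Qed.

Lemma fBY_lt (R : realType) (delta : R) (K s : nat) (x : R) :
  0 < delta -> (0 < K)%N -> (0 < s)%N -> (s <= K)%N -> 0 < ellK R K -> 0 <= x ->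
  (fBY delta K x < ((delta * s%:R / K%:R)%:E)^-1)%E <->
  delta * s%:R / (K%:R * ellK R K) < x.
Proof.
move=> d0 K0 s0 sK l0 x0.
have K0' : 0 < K%:R :> R by rewrite ltr0n.
have s0' : 0 < s%:R :> R by rewrite ltr0n.
have sK' : s%:R <= K%:R :> R by rewrite ler_nat.
have a0 : 0 < delta * s%:R / K%:R by rewrite !mulr_gt0 ?invr_gt0.
rewrite inver gt_eqF // /fBY.
case: ifP => xle; last first.
  split => [_|_]; last by rewrite lte_fin invr_gt0.
  move/negbT: xle; rewrite -ltNge => h; apply: le_lt_trans h.
  rewrite invfM mulrA ler_pM2r ?invr_gt0 // ler_pdivrMr // ler_pM2l //.
set c := Num.ceil _.
case: eqP => [c0|/eqP c0].
  split => // h; exfalso.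
  have : K%:R * ellK R K * x / delta <= 0.
    by rewrite -[0 : R]/((0 : int)%:~R) -ceil_le_int -/c c0.
  rewrite pmulr_lle0 ?invr_gt0 // pmulr_rle0 ?mulr_gt0 // => x0'.
  have : x <= 0 by [].
  by rewrite leNgt (lt_trans _ h) // !mulr_gt0 ?invr_gt0 ?mulr_gt0.
have cge : 0 <= c.
  rewrite /c ceil_ge0.
  apply: (@lt_le_trans _ _ 0); first by rewrite oppr_lt0.
  by rewrite divr_ge0 ?mulr_ge0 ?ler0n ?(ltW l0) ?(ltW d0).
have cpos : 0 < c by rewrite lt_neqAle eq_sym c0 cge.
have cR : 0 < c%:~R :> R by rewrite ltr0z.
rewrite lte_fin invf_div ltr_pM2l // ltf_pV2 ?posrE ?mulr_gt0 //.
rewrite ltr_pM2l // -[s%:R]/((s%:Z)%:~R) ltr_int ceil_gt_int /=.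
rewrite ltr_pdivlMr // ltr_pdivrMr ?mulr_gt0 // [s%:~R * _]mulrC [x * _]mulrC.
by [].
Qed.

Lemma pdual_ge0 (R : realType) (T : Type) (C : R -> set T) t :
  usc_CI C -> 0 <= pdual C t.
Proof.
move=> uC; rewrite /pdual.
set A := [set b : R | (0 <= b <= 1) /\ ~ C b t].
have lA : has_lbound A by exists 0 => c [/andP[]].
case: (pselect (exists a : R, A a)) => [Aex|_] /=; last by rewrite ler01.
have [b Ab] := Aex.
by have [/andP[h _] _] := @inf_in _ A (uC t) (ex_intro _ b Ab) lA.
Qed.

Theorem corollary1 (R : realType) (d : measure_display) (Omega : measurableType d)
    (P : probability Omega R) (K : nat) (delta : R)
    (Theta : 'I_K -> Type) (theta : forall i, Theta i)
    (C : forall i : 'I_K, R -> Omega -> set (Theta i)) :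
  0 < delta < 1 ->
  (forall i w, nonincreasing_CI (fun a => C i a w)) ->
  (forall i w, usc_CI (fun a => C i a w)) ->
  (forall i (a : R), (0 <= a <= 1)%R ->
     (1 - a)%:E <= P [set w | C i a w (theta i)])%E ->
  forall (w : Omega) (S : {set 'I_K}) (i : 'I_K), i \in S ->
    C i (delta * #|S|%:R / (K%:R * ellK R K)) w =
    calibrate (fBY delta K) (fun a => C i a w) (delta * #|S|%:R / K%:R).
Proof.
move=> /andP[d0 d1] nC uC _ w S i iS.
have K0 : (0 < K)%N := leq_ltn_trans (leq0n i) (ltn_ord i).
have s0 : (0 < #|S|)%N by apply/card_gt0P; exists i.
have sK : (#|S| <= K)%N by rewrite -[X in (_ <= X)%N]card_ord; exact: max_card.
have l1 : 1 <= ellK R K.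
  by rewrite /ellK big_ltn // invr1 lerDl sumr_ge0.
have l0 : 0 < ellK R K by apply: lt_le_trans l1; rewrite ltr01.
have K0' : 0 < K%:R :> R by rewrite ltr0n.
have s0' : 0 < #|S|%:R :> R by rewrite ltr0n.
have sK' : #|S|%:R <= K%:R :> R by rewrite ler_nat.
have a01 : 0 <= delta * #|S|%:R / (K%:R * ellK R K) < 1.
  apply/andP; split; first by rewrite ltW // !mulr_gt0 // invr_gt0 mulr_gt0.
  rewrite ltr_pdivrMr ?mulr_gt0 // mul1r.
  apply: (@lt_le_trans _ _ (#|S|%:R)); first by rewrite gtr_pMl.
  apply: (le_trans sK'); by rewrite ler_peMr // ltW.
apply: funext => t; apply/propext.
rewrite (propext (@key _ _ _ t _ (nC i w) (uC i w) a01)) /calibrate /=.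
rewrite (propext (@fBY_lt _ _ _ _ (pdual (fun a => C i a w) t) d0 K0 s0 sK l0 _)) //.
exact: pdual_ge0.
Qed.
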